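(* In the setting described in the context, $\displaystyle\sum_{i=0}^{t-1}w_i^2=\frac{q^2+(t+1)q+1}{t}$.
   Context: Let $q=p^h$ with $p$ prime, $h\ge1$. Let $\alpha$ be a primitive element of $\mathbb{F}_{q^3}$; the points of $PG(2,q)$ are the 1-dimensional $\mathbb{F}_q$-subspaces of $\mathbb{F}_{q^3}$, and $P_i$ denotes the point represented by $\alpha^i$, so $PG(2,q)=\{P_0,\dots,P_{q^2+q}\}$. Let $\tau:P_i\mapsto P_{ip\bmod(q^2+q+1)}$ (a collineation) and let $\ell_0$ be a line of $PG(2,q)$ fixed by $\tau$. Let $t$ be a positive divisor of $q^2+q+1$ and for $i=0,\dots,t-1$ let $O_i=\{P_u:u\equiv i\pmod t\}$. For $u=0,\dots,t-1$ let $w_u=|\ell_0\cap O_u|$. *)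

(* Defs.v *)
From HB Require Import structures.
From mathcomp Require Import all_boot all_order all_algebra all_field.
Set Implicit Arguments. Unset Strict Implicit. Unset Printing Implicit Defensive.
Import GRing.Theory.
Local Open Scope ring_scope.

Section PG.
Variables (L : finFieldType) (q : nat) (alpha : L).

Definition Fq : {set L} := [set x : L | x ^+ q == x].

Definition Npts : nat := (q ^ 2 + q + 1)%N.

Definition Pt (i : nat) : {set L} := [set c * alpha ^+ i | c in Fq].

Definition PG2 : {set {set L}} := [set Pt (val i) | i : 'I_Npts].

Definition is_subspace2 (U : {set L}) : Prop :=
  [/\ 0 \in U,
      {in U &, forall x y, x + y \in U},
      {in Fq & U, forall c x, c * x \in U}
    & #|U| = (q ^ 2)%N].

Definition line_of (U : {set L}) : {set {set L}} :=
  [set P in PG2 | P \subset U].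

Definition is_line (l : {set {set L}}) : Prop :=
  exists U : {set L}, is_subspace2 U /\ l = line_of U.

Definition Orb (t u : nat) : {set {set L}} :=
  [set Pt (val i) | i : 'I_Npts & (val i %% t == u)%N].

End PG.

(* Main.v *)
Require Import Defs.
From HB Require Import structures.
From mathcomp Require Import all_boot all_order all_algebra all_field.
From mathcomp Require Import zify.
Import GRing.Theory.
Local Open Scope ring_scope.
Set Implicit Arguments. Unset Strict Implicit. Unset Printing Implicit Defensive.

Lemma M_eq q : (0 < q)%N -> (q ^ 3 - 1 = (q - 1) * Npts q)%N.
Proof. rewrite /Npts => ?; nia. Qed.

Lemma alpha_eq (L : finFieldType) (q : nat) (alpha : L) :
  (q ^ 3 - 1)%N.-primitive_root alpha -> forall i j,
  (alpha ^+ i == alpha ^+ j) = (i == j %[mod (q ^ 3 - 1)])%N.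
Proof. by move=> pr i j; rewrite (eq_prim_root_expr pr). Qed.

Lemma alpha_neq0 (L : finFieldType) (q : nat) (alpha : L) m :
  (1 < q)%N -> (q ^ 3 - 1)%N.-primitive_root alpha -> alpha ^+ m != 0.
Proof.
move=> q1 pr; rewrite expf_neq0 // (prim_root_eq0 pr).
have : (1 < q ^ 3)%N by rewrite (ltn_trans q1) // -{1}(expn1 q) ltn_exp2l.
by case: (q ^ 3)%N => [|[|]].
Qed.

Lemma nonzero_pow (L : finFieldType) (q : nat) (alpha : L) (x : L) :
  #|L| = (q ^ 3)%N -> (1 < q)%N -> (q ^ 3 - 1)%N.-primitive_root alpha ->
  x != 0 -> exists m, x = alpha ^+ m.
Proof.
move=> cL q1 pr nx.
have h1 : (q ^ 3 = (q ^ 3 - 1).+1)%N.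
  have : (1 < q ^ 3)%N by rewrite (ltn_trans q1) // -{1}(expn1 q) ltn_exp2l.
  by case: (q ^ 3)%N => [|n] //; rewrite subn1.
have : x ^+ (q ^ 3 - 1) = 1.
  have := expf_card x; rewrite cL {1}h1 exprS => h.
  by apply: (mulfI nx); rewrite mulr1.
move=> h2; have [i ->] := prim_rootP pr h2; by exists i.
Qed.

Lemma Fq_pow (L : finFieldType) (q : nat) (alpha : L) m :
  (1 < q)%N -> (q ^ 3 - 1)%N.-primitive_root alpha ->
  (alpha ^+ m \in Fq L q) = (Npts q %| m)%N.
Proof.
move=> q1 pr; rewrite inE -exprM (alpha_eq pr) eqn_mod_dvd; last first.
  by rewrite leq_pmulr // ltnW.
rewrite (M_eq (ltnW q1)) -{2}(muln1 m) -mulnBr.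
by rewrite [(m * _)%N]mulnC dvdn_pmul2l // subn_gt0.
Qed.


Definition frob_add (L : finFieldType) (q : nat) := forall x y : L, (x + y) ^+ q = x ^+ q + y ^+ q.

Lemma frobN (L : finFieldType) q (x : L) : (0 < q)%N -> frob_add L q -> (- x) ^+ q = - x ^+ q.
Proof.
move=> q0 fa; apply/eqP; rewrite -subr_eq0 opprK addrC -fa subrr expr0n.
by rewrite eqn0Ngt q0.
Qed.

Lemma Fq0 (L : finFieldType) q : (0 < q)%N -> (0 : L) \in Fq L q.
Proof. by move=> q0; rewrite inE expr0n eqn0Ngt q0. Qed.

Lemma Fq1 (L : finFieldType) q : (1 : L) \in Fq L q.
Proof. by rewrite inE expr1n. Qed.

Lemma FqD (L : finFieldType) q (x y : L) : frob_add L q ->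
  x \in Fq L q -> y \in Fq L q -> x + y \in Fq L q.
Proof. by move=> fa; rewrite !inE fa => /eqP -> /eqP ->. Qed.

Lemma FqN (L : finFieldType) q (x : L) : (0 < q)%N -> frob_add L q ->
  x \in Fq L q -> - x \in Fq L q.
Proof. by move=> q0 fa; rewrite !inE frobN // => /eqP ->. Qed.

Lemma FqB (L : finFieldType) q (x y : L) : (0 < q)%N -> frob_add L q ->
  x \in Fq L q -> y \in Fq L q -> x - y \in Fq L q.
Proof. by move=> q0 fa hx hy; apply: FqD => //; apply: FqN. Qed.

Lemma FqM (L : finFieldType) q (x y : L) :
  x \in Fq L q -> y \in Fq L q -> x * y \in Fq L q.
Proof. by rewrite !inE exprMn => /eqP -> /eqP ->. Qed.

Lemma FqV (L : finFieldType) q (x : L) :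
  x \in Fq L q -> x^-1 \in Fq L q.
Proof. by rewrite !inE exprVn => /eqP ->. Qed.

Lemma card_Fq (L : finFieldType) (q : nat) (alpha : L) :
  #|L| = (q ^ 3)%N -> (1 < q)%N -> (q ^ 3 - 1)%N.-primitive_root alpha ->
  #|Fq L q| = q.
Proof.
move=> cL q1 pr.
have q0 : (0 < q)%N by apply: ltnW.
have MN := M_eq q0.
have -> : Fq L q = 0 |: [set alpha ^+ (val j * Npts q) | j : 'I_(q - 1)].
  apply/setP => x; rewrite in_setU1; apply/idP/idP.
    have [->|nx] := eqVneq x 0; first by move=> _; apply/orP; left.
    have [m ->] := nonzero_pow cL q1 pr nx.
    rewrite (Fq_pow _ q1 pr) => /dvdnP [k km].
    apply/orP; right; apply/imsetP.
    have kl : (k %% (q - 1) < q - 1)%N by rewrite ltn_mod subn_gt0.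
    exists (Ordinal kl) => //=.
    apply/eqP; rewrite (alpha_eq pr) km MN.
    by rewrite muln_modl ?modn_mod // /Npts.
  case/orP => [/eqP ->|/imsetP [j _ ->]]; first by rewrite Fq0.
  by rewrite (Fq_pow _ q1 pr) dvdn_mull.
rewrite cardsU1 card_imset ?card_ord.
  have -> : (0 \notin [set alpha ^+ (val j * Npts q) | j : 'I_(q - 1)]).
    apply/negP => /imsetP [j _] /eqP; rewrite eq_sym.
    by rewrite (negPf (alpha_neq0 _ q1 pr)).
  by rewrite add1n subn1 prednK.
move=> i j /eqP; rewrite (alpha_eq pr) MN !modn_small; last 2 first.
- by rewrite ltn_pmul2r ?ltn_ord // /Npts addn1.
- by rewrite ltn_pmul2r ?ltn_ord // /Npts addn1.
by rewrite eqn_pmul2r ?/Npts ?addn1 // => /eqP /val_inj.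
Qed.

From mathcomp Require Import ring.

Lemma span_U (L : finFieldType) (q : nat) (alpha : L) (U : {set L}) (x y : L) :
  #|L| = (q ^ 3)%N -> (1 < q)%N -> (q ^ 3 - 1)%N.-primitive_root alpha ->
  frob_add L q -> is_subspace2 q U ->
  x \in U -> y \in U -> x != 0 -> (forall a, a \in Fq L q -> y != a * x) ->
  forall z, z \in U -> exists a b, [/\ a \in Fq L q, b \in Fq L q & z = a * x + b * y].
Proof.
move=> cL q1 pr fa [U0 UD UZ cU] xU yU nx ny z zU.
have q0 : (0 < q)%N by apply: ltnW.
pose f := fun u : L * L => u.1 * x + u.2 * y.
pose S := [set f u | u in setX (Fq L q) (Fq L q)].
have SU : S \subset U.
  apply/subsetP => _ /imsetP [[a b] /setXP [ha hb] ->].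
  by rewrite /f /=; apply: UD; apply: UZ.
have cS : #|S| = (q ^ 2)%N.
  rewrite card_in_imset ?cardsX ?(card_Fq cL q1 pr) ?expnS ?expn1 ?muln1 //.
  move=> [a b] [a' b'] /setXP [ha hb] /setXP [ha' hb']; rewrite /f /= => e.
  have [bb|nb] := eqVneq b b'.
    subst b'; have : a * x = a' * x by apply: (addIr (b * y)).
    by move/(mulIf nx) ->.
  have e2 : (b - b') * y = (a' - a) * x.
    have h : a * x + b * y - (a' * x + b' * y) = 0 by rewrite e subrr.
    by apply/eqP; rewrite -subr_eq0 -h; apply/eqP; ring.
  have nb0 : b - b' != 0 by rewrite subr_eq0.
  have : y = ((a' - a) / (b - b')) * x.
    by rewrite mulrAC -e2 mulrAC mulfV // mul1r.
  move/eqP; rewrite (negPf (ny _ _)) // FqM ?FqV ?FqB //.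
have : S == U by rewrite eqEcard SU cS cU leqnn.
move/eqP => SeU; move: zU; rewrite -SeU => /imsetP [[a b] /setXP [ha hb] ->].
by exists a, b.
Qed.

Lemma quad_Fq (L : finFieldType) (q : nat) (a b c : L) :
  #|L| = (q ^ 3)%N -> (0 < q)%N -> frob_add L q ->
  a \in Fq L q -> b \in Fq L q -> c ^+ 2 = a + b * c -> c \in Fq L q.
Proof.
move=> cL q0 fa; rewrite !inE => /eqP ha /eqP hb e.
set d := c ^+ q.
have ed : d ^+ 2 = a + b * d.
  by rewrite /d -exprM mulnC exprM e fa exprMn ha hb.
have [//|ndc] := eqVneq d c.
have h0 : (d - c) * (d + c - b) = 0.
  have -> : (d - c) * (d + c - b) = (d ^+ 2 - c ^+ 2) - b * (d - c) by ring.
  by rewrite ed e; ring.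
move/eqP: h0; rewrite mulf_eq0 subr_eq0 (negPf ndc) /= subr_eq0 => /eqP edb.
have dc : d = b - c by rewrite -edb addrK.
have e2 : d ^+ q = c.
  by rewrite dc fa frobN // hb -/d dc opprB addrC subrK.
have : c ^+ (q ^ 3) = d.
  by rewrite (expnS q 2) mulnC exprM expnS expn1 exprM -/d e2.
by rewrite -cL expf_card => /esym/eqP; rewrite (negPf ndc).
Qed.

Lemma modN_eq (L : finFieldType) (q : nat) (alpha : L) i j :
  (1 < q)%N -> (q ^ 3 - 1)%N.-primitive_root alpha ->
  alpha ^+ i = alpha ^+ j -> (i %% Npts q = j %% Npts q)%N.
Proof.
move=> q1 pr /eqP; rewrite (alpha_eq pr) (M_eq (ltnW q1)) => /eqP e.
by rewrite -(modn_dvdm i (dvdn_mull (q - 1) (dvdnn (Npts q)))) e modn_dvdm // dvdn_mull.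
Qed.

Lemma U_mod (L : finFieldType) (q : nat) (alpha : L) (U : {set L}) m :
  (1 < q)%N -> (q ^ 3 - 1)%N.-primitive_root alpha -> is_subspace2 q U ->
  (alpha ^+ m \in U) = (alpha ^+ (m %% Npts q) \in U).
Proof.
move=> q1 pr [U0 UD UZ cU].
have hf : alpha ^+ (m %/ Npts q * Npts q) \in Fq L q.
  by rewrite (Fq_pow _ q1 pr) dvdn_mull.
have e : alpha ^+ m = alpha ^+ (m %/ Npts q * Npts q) * alpha ^+ (m %% Npts q).
  by rewrite -exprD -divn_eq.
apply/idP/idP => h.
  have -> : alpha ^+ (m %% Npts q) = (alpha ^+ (m %/ Npts q * Npts q))^-1 * alpha ^+ m.
    by rewrite e mulrA mulVf ?mul1r // (alpha_neq0 _ q1 pr).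
  by apply: UZ => //; apply: FqV.
by rewrite e; apply: UZ.
Qed.

Lemma key (L : finFieldType) (q : nat) (alpha : L) (U : {set L}) j j' k :
  #|L| = (q ^ 3)%N -> (1 < q)%N -> (q ^ 3 - 1)%N.-primitive_root alpha ->
  frob_add L q -> is_subspace2 q U ->
  (j < Npts q)%N -> (j' < Npts q)%N -> j != j' ->
  alpha ^+ j \in U -> alpha ^+ j' \in U ->
  alpha ^+ (k + j) \in U -> alpha ^+ (k + j') \in U -> (Npts q %| k)%N.
Proof.
move=> cL q1 pr fa hU jN j'N njj xU x'U cxU cx'U.
have q0 : (0 < q)%N by apply: ltnW.
have hU' := hU; case: hU' => [U0 UD UZ cardU].
rewrite -(Fq_pow _ q1 pr).
set x := alpha ^+ j; set x' := alpha ^+ j'; set c := alpha ^+ k.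
have nx : x != 0 by exact: (alpha_neq0 _ q1 pr).
have indep : forall a, a \in Fq L q -> x' != a * x.
  move=> a ha; apply/eqP => ea.
  have na : a != 0 by apply: contraNneq (alpha_neq0 j' q1 pr) => a0; rewrite -/x' ea a0 mul0r.
  have [m em] := nonzero_pow cL q1 pr na.
  move: ha; rewrite em (Fq_pow _ q1 pr) => /dvdnP [s ms].
  move: ea; rewrite em -exprD => /(modN_eq q1 pr).
  rewrite ms modnMDl !modn_small // => ejj.
  by rewrite ejj eqxx in njj.
have cU : forall z, z \in U -> c * z \in U.
  move=> z zU; have [a [b [ha hb ->]]] := span_U cL q1 pr fa hU xU x'U nx indep zU.
  rewrite mulrDr !mulrA ![c * _]mulrC -!mulrA.
  by apply: UD; apply: UZ => //; rewrite /c -exprD.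
have yU : c * x \in U by apply: cU.
have [a /andP [ha /eqP eca] | none] := pickP [pred a | (a \in Fq L q) && (c * x == a * x)].
  by move/(mulIf nx): eca => ->.
have indep2 : forall a, a \in Fq L q -> c * x != a * x.
  by move=> a ha; move: (none a); rewrite /= ha /= => ->.
have [a [b [ha hb e]]] := span_U cL q1 pr fa hU xU yU nx indep2 (cU _ yU).
apply: (quad_Fq cL q0 fa ha hb).
apply: (mulIf nx); transitivity (c * (c * x)); first by rewrite expr2 mulrA.
by rewrite e /x /c; ring.
Qed.

Lemma card_D (L : finFieldType) (q : nat) (alpha : L) (U : {set L}) :
  #|L| = (q ^ 3)%N -> (1 < q)%N -> (q ^ 3 - 1)%N.-primitive_root alpha ->
  is_subspace2 q U ->
  #|[set i : 'I_(Npts q) | alpha ^+ i \in U]| = q.+1.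
Proof.
move=> cL q1 pr hU; have hU' := hU; case: hU' => [U0 UD UZ cardU].
have q0 : (0 < q)%N by apply: ltnW.
have N0 : (0 < Npts q)%N by rewrite /Npts addn1.
have MN := M_eq q0.
set D := [set i : 'I_(Npts q) | alpha ^+ i \in U].
pose g := fun sr : 'I_(q - 1) * 'I_(Npts q) => alpha ^+ (sr.1 * Npts q + sr.2).
have bnd : forall sr : 'I_(q - 1) * 'I_(Npts q), (sr.1 * Npts q + sr.2 < q ^ 3 - 1)%N.
  move=> [s r] /=; rewrite MN.
  apply: (@leq_trans (s.+1 * Npts q)); first by rewrite mulSn addnC ltn_add2r.
  by rewrite leq_mul2r ltn_ord orbT.
have ginj : injective g.
  move=> [s r] [s' r'] /eqP; rewrite /g (alpha_eq pr) !modn_small ?bnd // => /eqP e.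
  have er : (r = r' :> nat).
    by rewrite -(modn_small (ltn_ord r)) -(modn_small (ltn_ord r')) -(modnMDl s) e modnMDl.
  have es : (s = s' :> nat).
    by move: e; rewrite er => /addIn /eqP; rewrite eqn_pmul2r // => /eqP.
  by congr pair; apply: val_inj.
have im : g @: setX [set: 'I_(q - 1)] D = U :\ 0.
  apply/setP => x; rewrite in_setD1; apply/imsetP/andP.
    move=> [[s r] /setXP [_ hr] ->]; split; first exact: alpha_neq0 _ q1 pr.
    by rewrite /g (U_mod _ q1 pr hU) modnMDl (modn_small (ltn_ord r)); move: hr; rewrite inE.
  move=> [nx xU]; have [m em] := nonzero_pow cL q1 pr nx.
  set m' := (m %% (q ^ 3 - 1))%N.
  have m'b : (m' < (q - 1) * Npts q)%N by rewrite -MN /m' ltn_pmod // MN muln_gt0 N0 subn_gt0 q1.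
  have sb : (m' %/ Npts q < q - 1)%N by rewrite ltn_divLR // mulnC.
  exists (Ordinal sb, Ordinal (ltn_pmod m' N0)).
    rewrite inE /= inE.
    rewrite inE /= -(U_mod _ q1 pr hU).
    suff -> : alpha ^+ m' = x by [].
    by rewrite em; apply/eqP; rewrite (alpha_eq pr) /m' modn_mod.
  by rewrite /g /= -divn_eq em; apply/eqP; rewrite (alpha_eq pr) /m' modn_mod.
have : #|g @: setX [set: 'I_(q - 1)] D| = #|U :\ 0| by rewrite im.
rewrite card_imset // cardsX cardsT card_ord.
have -> : #|U :\ 0| = ((q - 1) * q.+1)%N.
  move: (cardsD1 0 U); rewrite U0 cardU add1n.
  have -> : (q ^ 2 = ((q - 1) * q.+1).+1)%N by nia.
  by case.
by move/eqP; rewrite eqn_pmul2l ?subn_gt0 // => /eqP.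
Qed.

Lemma Pt_sub (L : finFieldType) (q : nat) (alpha : L) (U : {set L}) i :
  is_subspace2 q U -> (Pt q alpha i \subset U) = (alpha ^+ i \in U).
Proof.
move=> [U0 UD UZ cardU]; apply/subsetP/idP.
  by move=> h; rewrite -[alpha ^+ i]mul1r; apply: h; apply/imsetP; exists 1; rewrite ?Fq1.
by move=> h _ /imsetP [c hc ->]; apply: UZ.
Qed.

Lemma Pt_inj (L : finFieldType) (q : nat) (alpha : L) i j :
  #|L| = (q ^ 3)%N -> (1 < q)%N -> (q ^ 3 - 1)%N.-primitive_root alpha ->
  Pt q alpha i = Pt q alpha j -> (i %% Npts q = j %% Npts q)%N.
Proof.
move=> cL q1 pr e.
have : alpha ^+ i \in Pt q alpha j.
  by rewrite -e; apply/imsetP; exists 1; rewrite ?Fq1 ?mul1r.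
case/imsetP => c hc ec.
have nc : c != 0.
  by apply: contraNneq (alpha_neq0 i q1 pr) => c0; rewrite ec c0 mul0r.
have [m em] := nonzero_pow cL q1 pr nc.
move: hc; rewrite em (Fq_pow _ q1 pr) => /dvdnP [s ms].
move: ec; rewrite em -exprD => /(modN_eq q1 pr) ->.
by rewrite ms modnMDl.
Qed.

Lemma w_eq (L : finFieldType) (q : nat) (alpha : L) (U : {set L}) t u :
  #|L| = (q ^ 3)%N -> (1 < q)%N -> (q ^ 3 - 1)%N.-primitive_root alpha ->
  is_subspace2 q U ->
  #|line_of q alpha U :&: Orb q alpha t u| =
  #|[set i : 'I_(Npts q) | (alpha ^+ i \in U) && (i %% t == u)%N]|.
Proof.
move=> cL q1 pr hU.
have -> : line_of q alpha U :&: Orb q alpha t u =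
   (fun i : 'I_(Npts q) => Pt q alpha i) @: [set i : 'I_(Npts q) | (alpha ^+ i \in U) && (i %% t == u)%N].
  apply/setP => P; rewrite inE /line_of /Orb inE; apply/idP/idP.
    case/andP => /andP [_ sPU] /imsetP [i]; rewrite inE => iu eP.
    apply/imsetP; exists i => //; rewrite inE iu andbT -(Pt_sub _ _ hU) -eP //.
  case/imsetP => i; rewrite inE => /andP [iU iu] ->.
  rewrite /= (Pt_sub _ _ hU) iU andbT; apply/andP; split.
    by apply/imsetP; exists i.
  by apply/imsetP; exists i; rewrite // inE.
rewrite card_in_imset // => i j _ _ /= /(Pt_inj cL q1 pr).
by rewrite !modn_small // => /val_inj.
Qed.

Lemma card_sum (T : finType) (A : {set T}) : #|A| = (\sum_(x : T) (x \in A : nat))%N.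
Proof. by rewrite -sum1_card big_mkcond /=; apply: eq_bigr => x _; case: (x \in A). Qed.

Lemma sumsq (N t : nat) (D : {set 'I_N}) : (0 < t)%N ->
  (\sum_(u < t) #|[set i : 'I_N | (i \in D) && (i %% t == u)%N]| ^ 2)%N =
  #|[set p : 'I_N * 'I_N | [&& p.1 \in D, p.2 \in D & (p.1 %% t == p.2 %% t)%N]]|.
Proof.
move=> t0.
under eq_bigr => u _ do rewrite -mulnn -cardsX card_sum.
rewrite exchange_big card_sum /=; apply: eq_bigr => p _.
rewrite inE.
have [hp|hp] := boolP [&& p.1 \in D, p.2 \in D & (p.1 %% t == p.2 %% t)%N].
  rewrite (bigD1 (Ordinal (ltn_pmod p.1 t0))) //= big1 ?addn0.
    by move: hp; rewrite !inE => /and3P [-> -> /eqP <-]; rewrite !eqxx.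
  move=> u nu; apply/eqP; rewrite eqb0; apply/negP; rewrite !inE => /andP [/andP [_ /eqP e1] _].
  by move: nu; rewrite -(inj_eq val_inj) /= e1 eqxx.
rewrite big1 // => u _; apply/eqP; rewrite eqb0; apply/negP; rewrite !inE.
move=> /andP [/andP [h1 /eqP e1] /andP [h2 /eqP e2]].
by move: hp; rewrite h1 h2 e1 e2 eqxx.
Qed.

Lemma modA1 (N i j : nat) : (i < N)%N -> (j < N)%N ->
  (((i + N - j) %% N + j) %% N = i)%N.
Proof.
move=> iN jN; rewrite modnDml subnK; last by rewrite (leq_trans (ltnW jN)) // leq_addl.
by rewrite modnDr modn_small.
Qed.

Lemma modA2 (N i j : nat) : (i < N)%N -> (j < N)%N ->
  (((i + N - j) %% N == 0) = (i == j))%N.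
Proof.
move=> iN jN; apply/eqP/eqP => [h|->]; last by rewrite addKn modnn.
by have := modA1 iN jN; rewrite h add0n modn_small.
Qed.

Lemma card_mult (N t : nat) : (0 < t)%N -> (t %| N)%N ->
  #|[set k : 'I_N | (t %| k)%N]| = (N %/ t)%N.
Proof.
move=> t0 tN.
have bd : forall s : 'I_(N %/ t), (s * t < N)%N.
  by move=> s; rewrite -ltn_divRL ?ltn_ord.
have -> : [set k : 'I_N | (t %| k)%N] = (fun s : 'I_(N %/ t) => Ordinal (bd s)) @: setT.
  apply/setP => k; rewrite inE; apply/idP/imsetP.
    move=> /dvdnP [s ks].
    have sb : (s < N %/ t)%N by rewrite ltn_divRL // -ks.
    by exists (Ordinal sb) => //; apply: val_inj.
  by move=> [s _ ->] /=; rewrite dvdn_mull.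
rewrite card_imset ?cardsT ?card_ord // => a b /(congr1 val) /= /eqP.
by rewrite eqn_pmul2r // => /eqP /val_inj.
Qed.

Lemma dvd_diff (N t i j : nat) : (0 < N)%N -> (t %| N)%N -> (j < N)%N ->
  (t %| (i + N - j) %% N)%N = (i %% t == j %% t)%N.
Proof.
move=> N0 tN jN.
rewrite /dvdn (modn_dvdm _ tN) -/(dvdn t _) -eqn_mod_dvd; last first.
  by rewrite (leq_trans (ltnW jN)) // leq_addl.
by rewrite -modnDmr (eqP tN) addn0.
Qed.

Lemma card_zero (N : nat) (N0 : (0 < N)%N) (M : {set 'I_N}) :
  Ordinal N0 \in M -> #|M :&: [set k : 'I_N | val k == 0%N]| = 1%N.
Proof.
move=> hM; rewrite -(cards1 (Ordinal N0)); apply: eq_card => k.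
rewrite !inE; apply/andP/eqP => [[_ /eqP k0]|->]; first by apply: val_inj.
by split.
Qed.

Lemma count_pairs (N t : nat) (D : {set 'I_N}) (N0 : (0 < N)%N) :
  (0 < t)%N -> (t %| N)%N -> (#|D| * #|D| - #|D| = N - 1)%N ->
  (forall i j i' j' : 'I_N, i \in D -> j \in D -> i' \in D -> j' \in D -> i != j ->
     ((i + N - j) %% N = (i' + N - j') %% N)%N -> j = j') ->
  #|[set p : 'I_N * 'I_N | [&& p.1 \in D, p.2 \in D & (p.1 %% t == p.2 %% t)%N]]| =
  (#|D| + N %/ t - 1)%N.
Proof.
move=> t0 tN cD hinj.
set P := [set p : 'I_N * 'I_N | _].
set B := [set p : 'I_N * 'I_N | p.1 == p.2].
pose f := fun p : 'I_N * 'I_N => Ordinal (ltn_pmod (p.1 + N - p.2) N0).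
set Q := setX D D :\: B.
have cQ : #|Q| = (N - 1)%N.
  have cB : #|setX D D :&: B| = #|D|.
    rewrite -(card_in_imset (f := fun i : 'I_N => (i, i))); last by move=> ? ? _ _ [].
    apply: eq_card => [[a b]]; rewrite !inE /=; apply/idP/imsetP.
      by case/andP => /andP [ha hb] /eqP eab; exists a => //; rewrite eab.
    by case=> c hc [-> ->]; rewrite hc eqxx.
  by rewrite -cD -cardsX -(cardsID B (setX D D)) cB addKn.
have finj : {in Q &, injective f}.
  move=> [a b] [a' b']; rewrite !inE /= => /andP [nab /andP [ha hb]] /andP [_ /andP [ha' hb']].
  move=> /(congr1 val) /= e.
  have ebb := hinj _ _ _ _ ha hb ha' hb' nab e.
  subst b'; congr pair; apply: val_inj.
  by have := modA1 (ltn_ord a) (ltn_ord b); rewrite e modA1.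
set NZ := [set k : 'I_N | val k != 0%N].
have cNZ : #|NZ| = (N - 1)%N.
  have h := cardsID [set k : 'I_N | val k == 0%N] [set: 'I_N].
  rewrite card_zero ?inE // cardsT card_ord in h.
  rewrite -[in RHS]h add1n subSS subn0.
  apply: eq_card => k.
  by rewrite !inE andbT.
have fQ : f @: Q = NZ.
  apply/eqP; rewrite eqEcard cNZ card_in_imset // cQ leqnn andbT.
  apply/subsetP => _ /imsetP [[a b] hp ->]; rewrite inE /= modA2 //.
  by move: hp; rewrite !inE => /andP [].
have -> : #|P| = (#|P :&: B| + #|P :\: B|)%N by rewrite cardsID.
have -> : #|P :&: B| = #|D|.
  rewrite -(card_in_imset (f := fun i : 'I_N => (i, i))); last by move=> ? ? _ _ [].
  apply: eq_card => [[a b]]; rewrite !inE /=; apply/idP/imsetP.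
    by case/andP => /and3P [ha hb _] /eqP eab; exists a => //; rewrite eab.
  by case=> c hc [-> ->]; rewrite hc !eqxx.
set K := [set k : 'I_N | (val k != 0%N) && (t %| k)%N].
have cK : #|K| = (N %/ t - 1)%N.
  have h := cardsID [set k : 'I_N | val k == 0%N] [set k : 'I_N | (t %| k)%N].
  rewrite card_zero ?inE ?dvdn0 // card_mult // in h.
  rewrite -[in RHS]h add1n subSS subn0.
  by apply: eq_card => k; rewrite !inE andbC.
have -> : #|P :\: B| = #|K|.
  have PBQ : P :\: B \subset Q.
    by apply/subsetP => p; rewrite !inE => /andP [-> /and3P [-> -> _]].
  rewrite -(card_in_imset (f := f)); last by move=> x y hx hy; apply: finj; apply: (subsetP PBQ).
  apply: eq_card => k; apply/imsetP/idP.
    move=> [p hp ->]; have := hp; rewrite !inE /= modA2 // => /andP [-> /and3P [_ _ e]].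
    by rewrite dvd_diff.
  move=> hk; have : k \in NZ by move: hk; rewrite !inE => /andP [].
  rewrite -fQ => /imsetP [p hp ekp]; exists p => //.
  move: hp hk; rewrite ekp !inE /= dvd_diff // => /andP [-> /andP [-> ->]].
  by case/andP => _ ->.
by rewrite cK addnBA // divn_gt0 // dvdn_leq.
Qed.

Unset Implicit Arguments. Set Strict Implicit.

Theorem lemma2 (p h : nat) (L : finFieldType) (alpha : L)
    (l0 : {set {set L}}) (t : nat) :
  prime p -> (0 < h)%N ->
  #|L| = ((p ^ h) ^ 3)%N ->
  ((p ^ h) ^ 3 - 1)%N.-primitive_root alpha ->
  is_line (p ^ h) alpha l0 ->
  (* l0 is fixed by tau : P_i |-> P_{i p mod (q^2+q+1)} *)
  (forall i : nat, (i < Npts (p ^ h))%N ->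
     (Pt (p ^ h) alpha i \in l0) =
     (Pt (p ^ h) alpha ((i * p) %% Npts (p ^ h)) \in l0)) ->
  (0 < t)%N -> (t %| Npts (p ^ h))%N ->
  ((\sum_(u < t) #|l0 :&: Orb (p ^ h) alpha t u| ^ 2)%N)%:R =
    (((p ^ h) ^ 2 + (t + 1) * (p ^ h) + 1)%N)%:R / (t%:R : rat).
Proof.
move=> pp h0 cL pr [U [hU ->]] _ t0 tN.
have fa : frob_add L (p ^ h).
  move=> x y; apply: GRing.exprDn_pchar.
  rewrite pnatX pnatE // (@card_finPcharP L p (h * 3)) //.
  by rewrite cL expnM.
move: cL pr fa hU tN; set q := (p ^ h)%N => cL pr fa hU tN.
have q1 : (1 < q)%N.
  have := prime_gt1 pp; rewrite /q -(prednK h0) expnS => p1.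
  have : (0 < p ^ h.-1)%N by rewrite expn_gt0 ltnW.
  nia.
have q0 : (0 < q)%N by apply: ltnW.
have N0 : (0 < Npts q)%N by rewrite /Npts addn1.
set D := [set i : 'I_(Npts q) | alpha ^+ i \in U].
have -> : (\sum_(u < t) #|line_of q alpha U :&: Orb q alpha t u| ^ 2 =
    \sum_(u < t) #|[set i : 'I_(Npts q) | (i \in D) && (i %% t == u)%N]| ^ 2)%N.
  apply: eq_bigr => u _; rewrite (@w_eq L q alpha U t u cL q1 pr hU); congr (_ ^ 2)%N.
  by apply: eq_card => i; rewrite !inE.
rewrite sumsq // (count_pairs N0) //; last 2 first.
- rewrite (card_D cL q1 pr hU) /Npts; nia.
- move=> i j i' j'; rewrite !inE => hi hj hi' hj' nij e.
  apply/val_inj/eqP; apply/negPn/negP => njj.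
  have := key (k := ((i + Npts q - j) %% Npts q)%N) cL q1 pr fa hU (ltn_ord j) (ltn_ord j') njj hj hj'.
  rewrite (U_mod _ q1 pr hU) modA1 // => /(_ hi).
  rewrite e (U_mod _ q1 pr hU) modA1 // => /(_ hi').
  rewrite /dvdn modn_mod -e modA2 //.
  by move=> eij; move: nij; rewrite -(inj_eq val_inj) eij.
rewrite /D (card_D cL q1 pr hU).
have tnz : (t%:R : rat) != 0 by rewrite Num.Theory.pnatr_eq0 -lt0n.
apply: (mulIf tnz); rewrite GRing.divfK // -!natrM; congr (_%:R).
have := divnK tN; rewrite /Npts => e.
rewrite addSn subn1 /= mulnDl e; nia.
Qed.
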